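(* For all integers $r, c \geq 1$, $S(r,c) = T(r,c) = \binom{r+c-2}{c-1}$.
   Context: Six-vertex model: on an $r \times c$ grid ($r$ rows, $c$ columns) there are $r$ horizontal lines and $c$ vertical lines meeting in $rc$ vertices. Each horizontal line consists of $c+1$ edges (the outermost ones are a left and a right boundary edge) and each vertical line of $r+1$ edges (the outermost ones are a top and a bottom boundary edge). A state assigns an orientation to every edge, agreeing with prescribed orientations on the boundary edges, such that at every vertex exactly two of the four adjacent edges point into the vertex and two point out. $S(r,c)$ is the number of states on the $r\times c$ grid with boundary conditions: all left boundary arrows point right; the right boundary arrow of the bottom row points left and all other right boundary arrows point right; all bottom boundary arrows point down; the top boundary arrow of the leftmost column points up and all other top boundary arrows point down. $T(r,c)$ is the number of states on the $r\times c$ grid with boundary conditions: the left boundary arrow of the top row points left and all other left boundary arrows point right; the right boundary arrow of the bottom row points left and all other right boundary arrows point right; all top and bottom boundary arrows point down. *)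

(* Defs.v *)
From mathcomp Require Import all_boot.
Set Implicit Arguments. Unset Strict Implicit. Unset Printing Implicit Defensive.

(* Rows i : 'I_r are numbered from top (i = 0) to bottom (i = r-1);
   columns j : 'I_c from left (j = 0) to right (j = c-1).
   Horizontal edge (i, k), k : 'I_(c+1): edge k of row i, i.e. the edge
   between the vertices (i, k-1) and (i, k); k = 0 is the left boundary edge,
   k = c the right boundary edge.  Its value is [true] iff it points right.
   Vertical edge (j, k), k : 'I_(r+1): edge k of column j, between vertices
   (k-1, j) and (k, j); k = 0 is the top boundary edge, k = r the bottom
   boundary edge.  Its value is [true] iff it points down. *)
Definition orient (r c : nat) : Type :=
  ({ffun 'I_r * 'I_c.+1 -> bool} * {ffun 'I_c * 'I_r.+1 -> bool})%type.

(* Ice rule: at every vertex exactly two adjacent edges point inward.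
   At vertex (i, j): the left edge points in iff it points right,
   the right edge iff it points left, the top edge iff it points down,
   the bottom edge iff it points up. *)
Definition ice_rule (r c : nat) (s : orient r c) : bool :=
  [forall i : 'I_r, forall j : 'I_c,
     (s.1 (i, widen_ord (leqnSn c) j) : nat)
     + (~~ s.1 (i, lift ord0 j) : nat)
     + (s.2 (j, widen_ord (leqnSn r) i) : nat)
     + (~~ s.2 (j, lift ord0 i) : nat) == 2].

Definition bdry_S (r c : nat) (s : orient r c) : bool :=
  [forall i : 'I_r, s.1 (i, ord0) == true] &&
  [forall i : 'I_r, s.1 (i, ord_max) == (val i != r.-1)] && (* right: bottom row left *)
  [forall j : 'I_c, s.2 (j, ord_max) == true] &&
  [forall j : 'I_c, s.2 (j, ord0) == (val j != 0)].       (* top: leftmost up *)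

Definition bdry_T (r c : nat) (s : orient r c) : bool :=
  [forall i : 'I_r, s.1 (i, ord0) == (val i != 0)] &&     (* left: top row left *)
  [forall i : 'I_r, s.1 (i, ord_max) == (val i != r.-1)] && (* right: bottom row left *)
  [forall j : 'I_c, s.2 (j, ord0) == true] &&
  [forall j : 'I_c, s.2 (j, ord_max) == true].

Definition S_count (r c : nat) : nat :=
  #|[pred s : orient r c | ice_rule s && bdry_S s]|.
Definition T_count (r c : nat) : nat :=
  #|[pred s : orient r c | ice_rule s && bdry_T s]|.

(* Main.v *)
Require Import Defs.
From mathcomp Require Import all_boot zify.
Set Implicit Arguments. Unset Strict Implicit. Unset Printing Implicit Defensive.

Lemma arith_ice (x y j : nat) : x <= y ->
  (~~ ((x < j) && (j <= y)) : nat) + (~~ ~~ ((x < j.+1) && (j.+1 <= y)) : nat)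
  + (j != x : nat) + (~~ (j != y) : nat) == 2.
Proof.
move=> xy.
case: (ltnP x j) => ?; case: (leqP j y) => ?; case: (ltnP x j.+1) => ?;
case: (leqP j.+1 y) => ?; case: (eqVneq j x) => ?; case: (eqVneq j y) => ?;
rewrite //=; lia.
Qed.

Lemma sum_eq1 n (f : nat -> bool) : \sum_(j < n) (f j : nat) = 1 ->
  exists2 x, x < n & forall j, j < n -> f j = (j == x).
Proof.
elim: n => [|n IH]; first by rewrite big_ord0.
rewrite big_ord_recr /=.
case: (boolP (f n)) => fn /=.
- rewrite addn1 => /eqP; rewrite eqSS sum_nat_eq0 => /forallP H.
  exists n => // j; rewrite ltnS leq_eqVlt => /orP [/eqP -> | jn]; first by rewrite eqxx.
  have := H (Ordinal jn) => /=; case: (f j) => //= _.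
  by apply/esym/eqP; lia.
- rewrite addn0 => /IH [x xn Hx]; exists x; first lia.
  move=> j; rewrite ltnS leq_eqVlt => /orP [/eqP -> | jn]; last exact: Hx.
  by rewrite (negbTE fn); apply/esym/eqP; lia.
Qed.

Lemma sum_ind J (x : nat) : \sum_(j < J) ((j : nat) == x : nat) = (x < J).
Proof.
elim: J => [|J IH]; first by rewrite big_ord0.
rewrite big_ord_recr /= IH.
case: (ltnP x J) => ?; case: (ltnP x J.+1) => ?; case: (eqVneq J x) => ?; rewrite //=; lia.
Qed.

Lemma arith_ice_gen (x y j : nat) : x <= y ->
  (~~ ((x < j) && (j <= y)) : nat) + (~~ ~~ ((x < j.+1) && (j.+1 <= y)) : nat)
  + (j != x : nat) + (~~ (j != y) : nat) == 2.
Proof.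
move=> xy.
case: (ltnP x j) => ?; case: (leqP j y) => ?; case: (ltnP x j.+1) => ?;
case: (leqP j.+1 y) => ?; case: (eqVneq j x) => ?; case: (eqVneq j y) => ?;
rewrite //=; lia.
Qed.

Definition aF R C (t : R.-tuple 'I_C.+1) (k : nat) : nat :=
  if k is k'.+1 then nth C.+1 (map val t) k' else 0.
Arguments aF : simpl never.

Definition Dm R C (t : R.-tuple 'I_C.+1) : orient R.+1 C.+1 :=
  ([ffun e : 'I_R.+1 * 'I_C.+2 => ~~ ((aF t e.1 < e.2) && (e.2 <= aF t e.1.+1))],
   [ffun e : 'I_C.+1 * 'I_R.+2 => (e.1 : nat) != aF t e.2]).

Definition Em R C (s : orient R.+1 C.+1) : R.-tuple 'I_C.+1 :=
  [tuple odflt ord0 [pick j | ~~ s.2 (j, inord k.+1)] | k < R].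

Lemma aF_in R C (t : R.-tuple 'I_C.+1) (k : 'I_R) : aF t k.+1 = tnth t k.
Proof. by rewrite /aF /= (nth_map ord0) ?size_tuple // -tnth_nth. Qed.

Lemma aF_end R C (t : R.-tuple 'I_C.+1) : aF t R.+1 = C.+1.
Proof. by rewrite /aF /= nth_default // size_map size_tuple. Qed.

Lemma aF_le R C (t : R.-tuple 'I_C.+1) k : k <= R -> aF t k <= C.
Proof.
rewrite /aF; case: k => [|k] //= kR.
by rewrite (nth_map ord0) ?size_tuple // -ltnS ltn_ord.
Qed.

Lemma aF_mono R C (t : R.-tuple 'I_C.+1) k : sorted leq (map val t) -> k <= R ->
  aF t k <= aF t k.+1.
Proof.
move=> /(sortedP 0) st kR.
case: k kR => [|k] kR; first by [].
have [kR'|kRe] : k.+1 < R \/ k.+1 = R by lia.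
  rewrite /aF /= (set_nth_default 0 _ (n:=k)) ?size_map ?size_tuple; last lia.
  rewrite (set_nth_default 0 _ (n:=k.+1)) ?size_map ?size_tuple; last lia.
  by apply: st; rewrite size_map size_tuple.
have -> : k.+2 = R.+1 by rewrite kRe.
by rewrite aF_end ltnW // ltnS aF_le.
Qed.

Lemma DmK R C : cancel (@Dm R C) (@Em R C).
Proof.
move=> t; apply: eq_from_tnth => k; rewrite tnth_mktuple.
case: pickP => [j /= | H] /=.
  rewrite ffunE negbK /= inordK; last by rewrite !ltnS ltnW.
  by rewrite aF_in => /eqP /val_inj.
have := H (tnth t k); rewrite ffunE /= inordK; last by rewrite !ltnS ltnW.
by rewrite aF_in eqxx.
Qed.

Lemma Dm_valid R C (t : R.-tuple 'I_C.+1) : sorted leq (map val t) ->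
  ice_rule (Dm t) && bdry_S (Dm t).
Proof.
move=> st; apply/andP; split.
  apply/forallP => i; apply/forallP => j; rewrite !ffunE /= /bump !leq0n !add1n.
  apply: arith_ice_gen.
  exact: aF_mono st (ltn_ord i).
rewrite /bdry_S -!andbA; apply/and4P; split; apply/forallP => i; rewrite ffunE /=.
- by [].
- have h1 : aF t i < C.+1 by rewrite ltnS aF_le // -ltnS.
  rewrite h1 /=.
  have [iR|iR] : i < R \/ (i : nat) = R by have := ltn_ord i; lia.
    have h2 := aF_le t iR.
    have -> : (C < aF t i.+1) = false by lia.
    have -> : ((i : nat) != R) = true by lia.
    by [].
  by rewrite iR aF_end ltnSn eqxx.
- by rewrite aF_end neq_ltn ltn_ord.
- by [].
Qed.

Definition vv R C (s : orient R.+1 C.+1) (k j : nat) : bool := ~~ s.2 (inord j, inord k).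
Definition hh R C (s : orient R.+1 C.+1) (i k : nat) : bool := ~~ s.1 (inord i, inord k).
Definition PP R C (s : orient R.+1 C.+1) (k J : nat) : nat := \sum_(j < J) (vv s k j : nat).

Lemma ice_nat R C (s : orient R.+1 C.+1) i j : ice_rule s -> i <= R -> j <= C ->
  hh s i j.+1 + vv s i.+1 j = hh s i j + vv s i j.
Proof.
move=> /forallP /(_ (inord i)) /forallP /(_ (inord j)) H iR jC.
have e1 : widen_ord (leqnSn C.+1) (inord j) = inord j :> 'I_C.+2.
  by apply: val_inj; rewrite /= !inordK // ltnS // ltnW.
have e2 : lift ord0 (inord j) = inord j.+1 :> 'I_C.+2.
  by apply: val_inj => /=; rewrite /bump leq0n add1n !inordK // ltnS.
have e3 : widen_ord (leqnSn R.+1) (inord i) = inord i :> 'I_R.+2.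
  by apply: val_inj; rewrite /= !inordK // ltnS // ltnW.
have e4 : lift ord0 (inord i) = inord i.+1 :> 'I_R.+2.
  by apply: val_inj => /=; rewrite /bump leq0n add1n !inordK // ltnS.
rewrite e1 e2 e3 e4 in H.
rewrite /hh /vv.
move: H; case: (s.1 _); case: (s.1 _); case: (s.2 _); case: (s.2 _); by [].
Qed.

Lemma bdry_nat R C (s : orient R.+1 C.+1) : bdry_S s ->
  [/\ forall i, i <= R -> hh s i 0 = false,
      forall i, i <= R -> hh s i C.+1 = (i == R),
      forall j, j <= C -> vv s R.+1 j = false &
      forall j, j <= C -> vv s 0 j = (j == 0)].
Proof.
rewrite /bdry_S -!andbA => /and4P [/forallP H1 /forallP H2 /forallP H3 /forallP H4].
split => i iR.
- have := H1 (inord i); rewrite /hh.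
  have -> : (ord0 : 'I_C.+2) = inord 0 by apply: val_inj => /=; rewrite inordK.
  by move/eqP ->.
- have := H2 (inord i); rewrite /hh.
  have -> : (ord_max : 'I_C.+2) = inord C.+1 by apply: val_inj => /=; rewrite inordK.
  by move/eqP ->; rewrite /= inordK ?ltnS // negbK.
- have := H3 (inord i); rewrite /vv.
  have -> : (ord_max : 'I_R.+2) = inord R.+1 by apply: val_inj => /=; rewrite inordK.
  by move/eqP ->.
- have := H4 (inord i); rewrite /vv.
  have -> : (ord0 : 'I_R.+2) = inord 0 by apply: val_inj => /=; rewrite inordK.
  by move/eqP ->; rewrite /= inordK ?ltnS // negbK.
Qed.

Lemma PP_rec R C (s : orient R.+1 C.+1) i J : ice_rule s -> bdry_S s -> i <= R -> J <= C.+1 ->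
  PP s i J = PP s i.+1 J + hh s i J.
Proof.
move=> Hi Hb iR; case: (bdry_nat Hb) => B1 _ _ _.
elim: J => [|J IH] JC; first by rewrite /PP !big_ord0 B1.
rewrite /PP !big_ord_recr /= -!/(PP _ _ _) IH ?(ltnW JC) //.
have := ice_nat Hi iR (JC : J <= C); lia.
Qed.

Lemma PP_tot R C (s : orient R.+1 C.+1) i : ice_rule s -> bdry_S s -> i <= R ->
  PP s i C.+1 = 1.
Proof.
move=> Hi Hb; case: (bdry_nat Hb) => _ B2 _ B4.
elim: i => [|i IH] iR.
  rewrite /PP big_ord_recl /= B4 // big1 // => j _.
  by rewrite /= B4 //; rewrite -ltnS.
have := PP_rec Hi Hb (ltnW iR) (leqnn _); rewrite B2 ?(ltnW iR) //.
have -> : (i == R) = false by apply/eqP; lia.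
rewrite IH ?(ltnW iR) //; lia.
Qed.

Lemma vchar R C (s : orient R.+1 C.+1) i j : ice_rule s -> bdry_S s -> i <= R.+1 -> j <= C ->
  vv s i j = (j == aF (Em s) i).
Proof.
move=> Hi Hb iR jC; case: (bdry_nat Hb) => _ _ B3 B4.
case: i iR => [|k] kR; first by rewrite B4.
have [kR'|kRe] : k < R \/ k = R by lia.
2: by rewrite kRe aF_end B3 //; apply/esym/eqP; lia.
have [x xC Hx] := sum_eq1 (PP_tot Hi Hb kR').
rewrite (aF_in (Em s) (Ordinal kR')) tnth_mktuple /=.
case: pickP => [y /= | H] /=.
  rewrite (_ : ~~ s.2 (y, inord k.+1) = vv s k.+1 y); last by rewrite /vv inord_val.
  rewrite Hx // => /eqP ->; exact: Hx.
have := H (inord x); rewrite (_ : ~~ s.2 (inord x, inord k.+1) = vv s k.+1 x) //.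
by rewrite Hx // eqxx.
Qed.

Lemma PPchar R C (s : orient R.+1 C.+1) i J : ice_rule s -> bdry_S s -> i <= R.+1 -> J <= C.+1 ->
  PP s i J = (aF (Em s) i < J).
Proof.
move=> Hi Hb iR JC; rewrite /PP -sum_ind; apply: eq_bigr => j _.
by rewrite vchar // -ltnS (leq_trans (ltn_ord j)).
Qed.

Lemma hchar R C (s : orient R.+1 C.+1) i J : ice_rule s -> bdry_S s -> i <= R -> J <= C.+1 ->
  (aF (Em s) i <= aF (Em s) i.+1) /\
  hh s i J = (aF (Em s) i < J) && (J <= aF (Em s) i.+1).
Proof.
move=> Hi Hb iR JC; split.
  have [iR'|iRe] : i < R \/ i = R by lia.
    have le1 : aF (Em s) i.+1 <= C by apply: aF_le.
    have := PP_rec Hi Hb iR (le1 : (aF (Em s) i.+1).+1 <= C.+1).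
    rewrite !PPchar // ?ltnSn; last by apply: ltnW.
    case: ltnP => //= _; lia.
  by rewrite iRe aF_end ltnW // ltnS aF_le.
have := PP_rec Hi Hb iR JC.
rewrite (PPchar Hi Hb) ?(PPchar Hi Hb) //; try lia.
Qed.

Lemma recon R C (s : orient R.+1 C.+1) : ice_rule s -> bdry_S s ->
  s = Dm (Em s) /\ sorted leq (map val (Em s)).
Proof.
move=> Hi Hb; split.
  rewrite /Dm; case: s Hi Hb => s1 s2 Hi Hb /=.
  congr pair; apply/ffunP => [[i k]]; rewrite ffunE /=.
    have [_ <-] := hchar Hi Hb (ltn_ord i) (ltn_ord k).
    by rewrite /hh !inord_val negbK.
  have := vchar Hi Hb (ltn_ord k) (ltn_ord i : (i : nat) <= C).
  by rewrite /vv !inord_val /= => <-; rewrite negbK.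
apply/(sortedP 0) => i; rewrite size_map size_tuple => iR.
rewrite (set_nth_default C.+1 0 (n:=i)); last by rewrite size_map size_tuple; lia.
rewrite (set_nth_default C.+1 0 (n:=i.+1)); last by rewrite size_map size_tuple.
have [le _] := hchar Hi Hb (ltnW iR) (leqnn C.+1).
exact: le.
Qed.

Lemma countS R C : S_count R.+1 C.+1 = 'C(R + C, R).
Proof.
rewrite -card_sorted_tuples -(card_imset _ (can_inj (@DmK R C))).
rewrite /S_count; apply: eq_card => s; rewrite !inE.
apply/idP/imsetP => [H | [t Ht ->]].
  case/andP: H => Hi Hb; have [E St] := recon Hi Hb.
  by exists (Em s); rewrite ?inE.
by apply: Dm_valid; rewrite inE in Ht.
Qed.

Definition flip R C (s : orient R.+1 C.+1) : orient R.+1 C.+1 :=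
  ([ffun e => (e == (ord0, ord0)) (+) s.1 e], [ffun e => (e == (ord0, ord0)) (+) s.2 e]).

Lemma flipK R C : involutive (@flip R C).
Proof.
by case=> s1 s2; rewrite /flip /=; congr pair; apply/ffunP => e; rewrite !ffunE addKb.
Qed.

Lemma flip_bdry R C (s : orient R.+1 C.+1) : bdry_T (flip s) = bdry_S s.
Proof.
have e1 : [forall i : 'I_R.+1, (flip s).1 (i, ord0) == (val i != 0)] =
          [forall i : 'I_R.+1, s.1 (i, ord0) == true].
  apply: eq_forallb => i; rewrite ffunE /= xpair_eqE eqxx andbT.
  by case: (s.1 _); case: (i == ord0) / eqP => [->|/eqP]; rewrite //= ?eqxx //;
     case: i => [[|i] ?].
have e2 : [forall i : 'I_R.+1, (flip s).1 (i, ord_max) == (val i != R.+1.-1)] =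
          [forall i : 'I_R.+1, s.1 (i, ord_max) == (val i != R.+1.-1)].
  by apply: eq_forallb => i; rewrite ffunE /= xpair_eqE andbF.
have e3 : [forall j : 'I_C.+1, (flip s).2 (j, ord0) == true] =
          [forall j : 'I_C.+1, s.2 (j, ord0) == (val j != 0)].
  apply: eq_forallb => i; rewrite ffunE /= xpair_eqE eqxx andbT.
  by case: (s.2 _); case: (i == ord0) / eqP => [->|/eqP]; rewrite //= ?eqxx //;
     case: i => [[|i] ?].
have e4 : [forall j : 'I_C.+1, (flip s).2 (j, ord_max) == true] =
          [forall j : 'I_C.+1, s.2 (j, ord_max) == true].
  by apply: eq_forallb => i; rewrite ffunE /= xpair_eqE andbF.
rewrite /bdry_T /bdry_S e1 e2 e3 e4.
by case: [forall _, _]; case: [forall _, _]; case: [forall _, _]; case: [forall _, _].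
Qed.

Lemma flip_ice R C (s : orient R.+1 C.+1) : s.1 (ord0, ord0) != s.2 (ord0, ord0) ->
  ice_rule (flip s) = ice_rule s.
Proof.
move=> H; apply: eq_forallb => i; apply: eq_forallb => j; rewrite !ffunE /= !xpair_eqE.
have -> : (lift ord0 j == ord0) = false by apply/negbTE; rewrite eq_sym; exact: neq_lift.
have -> : (lift ord0 i == ord0) = false by apply/negbTE; rewrite eq_sym; exact: neq_lift.
rewrite !andbF /=.
case: (eqVneq i ord0) => [-> | Hi]; case: (eqVneq j ord0) => [-> | Hj] //=.
- have -> : widen_ord (leqnSn C.+1) ord0 = ord0 by apply: val_inj.
  have -> : widen_ord (leqnSn R.+1) ord0 = ord0 by apply: val_inj.
  move: H; case: (s.1 (ord0, ord0)); case: (s.2 (ord0, ord0)) => //= _;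
  case: (s.1 _); case: (s.2 _); by [].
- have -> : (widen_ord (leqnSn C.+1) j == ord0) = false.
    by apply/eqP => /(congr1 val) /= E; move/eqP: Hj; apply; apply: val_inj.
  by [].
- have -> : (widen_ord (leqnSn R.+1) i == ord0) = false.
    by apply/eqP => /(congr1 val) /= E; move/eqP: Hi; apply; apply: val_inj.
  by [].
Qed.

Lemma flipE R C (s : orient R.+1 C.+1) :
  (ice_rule (flip s) && bdry_T (flip s)) = (ice_rule s && bdry_S s).
Proof.
rewrite flip_bdry; case Hb: (bdry_S s); last by rewrite !andbF.
rewrite !andbT flip_ice //.
move: Hb; rewrite /bdry_S -!andbA => /and4P [/forallP H1 _ _ /forallP H4].
by rewrite (eqP (H1 ord0)) (eqP (H4 ord0)).
Qed.

Lemma countT R C : T_count R.+1 C.+1 = S_count R.+1 C.+1.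
Proof.
rewrite /T_count /S_count -(card_imset _ (can_inj (@flipK R C))).
apply: eq_card => s; rewrite !inE.
apply/imsetP/idP => [[t Ht ->] | H].
  by rewrite -flipE flipK; rewrite inE in Ht.
exists (flip s); last by rewrite flipK.
by rewrite inE flipE.
Qed.

Theorem lemma1 (r c : nat) (hr : 1 <= r) (hc : 1 <= c) :
  S_count r c = 'C(r + c - 2, c - 1) /\ T_count r c = 'C(r + c - 2, c - 1).
Proof.
case: r hr => // R _; case: c hc => // C _.
have E : S_count R.+1 C.+1 = 'C(R.+1 + C.+1 - 2, C.+1 - 1).
  rewrite countS subn1 /= addSn addnS /= subn2 /=.
  by rewrite -(bin_sub (leq_addr C R)) addKn.
by split; rewrite ?countT E.
Qed.
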